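(* Let $\Lambda$ be a basic finite-dimensional $\tau$-tilting finite algebra over a field $K$, and let $\mathcal{T}\in\mathrm{tors}\,\Lambda$. (1) If there exists a nonzero projective module $P\in\mathcal{T}$, then $\mathcal{T}$ is not in the image of $\mathrm{pop}^{\downarrow}_{\mathrm{tors}\,\Lambda}$. (2) If there exists a nonzero injective module $I\in\mathcal{T}^\perp$, then $\mathcal{T}$ is not in the image of $\mathrm{pop}^{\uparrow}_{\mathrm{tors}\,\Lambda}$.
   Context: $\mathrm{mod}\,\Lambda$: finitely generated right $\Lambda$-modules; $\mathrm{tors}\,\Lambda$: finite lattice of torsion classes (subcategories closed under extensions and quotients) under inclusion. For a finite lattice, $\mathrm{pop}^{\downarrow}(x)=x\wedge\bigwedge\{y:y\lessdot x\}$ and $\mathrm{pop}^{\uparrow}(x)=x\vee\bigvee\{y:x\lessdot y\}$. $\mathcal{T}^\perp=\{M:\mathrm{Hom}_\Lambda(T,M)=0\ \forall T\in\mathcal{T}\}$. *)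

(* Defs.v *)
From HB Require Import structures.
From mathcomp Require Import all_boot all_order all_algebra falgebra.
Set Implicit Arguments.
Unset Strict Implicit.
Unset Printing Implicit Defensive.
Import GRing.Theory.
Local Open Scope ring_scope.

(* A finitely generated (= finite-dimensional) right A-module, realised on the
   row space 'rV[K]_n: v . a := v *m fact a. *)
Record fmod (K : fieldType) (A : falgType K) := FMod {
  fdim : nat;
  fact : A -> 'M[K]_fdim;
  fact_lin : forall (k : K) (a b : A), fact (k *: a + b) = k *: fact a + fact b;
  fact1 : fact 1 = 1%:M;
  factM : forall a b, fact (a * b) = fact a *m fact b }.

Section Modules.
Variables (K : fieldType) (A : falgType K).

(* module homomorphisms M -> N, acting on row vectors: v |-> v *m f *)
Definition is_hom (M N : fmod A) (f : 'M[K]_(fdim M, fdim N)) : Prop :=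
  forall a : A, fact M a *m f = f *m fact N a.

Definition ses (L M N : fmod A) (f : 'M[K]_(fdim L, fdim M))
  (g : 'M[K]_(fdim M, fdim N)) : Prop :=
  [/\ is_hom f, is_hom g, row_free f, row_full g & (f == kermx g)%MS].

(* torsion class: full subcategory (containing 0) closed under quotients
   (hence under isomorphism) and extensions *)
Definition torsion_class (T : fmod A -> Prop) : Prop :=
  [/\ (forall M : fmod A, fdim M = 0%N -> T M),
      (forall (M N : fmod A) (g : 'M[K]_(fdim M, fdim N)),
          is_hom g -> row_full g -> T M -> T N)
    & (forall (L M N : fmod A) f g, @ses L M N f g -> T L -> T N -> T M)].

Definition tsub (T U : fmod A -> Prop) : Prop := forall M, T M -> U M.
Definition teq (T U : fmod A -> Prop) : Prop := forall M, T M <-> U M.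

Fixpoint pin (X : Type) (x : X) (s : seq X) : Prop :=
  if s is y :: s' then y = x \/ pin x s' else False.

Definition tors_finite : Prop :=
  exists s : seq (fmod A -> Prop),
    forall T, torsion_class T -> exists2 U, pin U s & teq T U.

Definition tcover (V U : fmod A -> Prop) : Prop :=
  [/\ torsion_class V, torsion_class U, tsub V U, ~ tsub U V &
      forall W, torsion_class W -> tsub V W -> tsub W U -> teq W V \/ teq W U].

(* pop-down: meet (= intersection) of U and all its lower covers *)
Definition pop_down (U : fmod A -> Prop) : fmod A -> Prop :=
  fun M => U M /\ forall V, tcover V U -> V M.

(* pop-up: join (= smallest torsion class containing) U and all its upper covers *)
Definition pop_up (U : fmod A -> Prop) : fmod A -> Prop :=
  fun M => forall W, torsion_class W -> tsub U W ->
             (forall V, tcover U V -> tsub V W) -> W M.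

Definition in_image_pop_down (T : fmod A -> Prop) : Prop :=
  exists U, torsion_class U /\ teq (pop_down U) T.
Definition in_image_pop_up (T : fmod A -> Prop) : Prop :=
  exists U, torsion_class U /\ teq (pop_up U) T.

Definition projective_mod (P : fmod A) : Prop :=
  forall (M N : fmod A) (g : 'M[K]_(fdim M, fdim N)) (f : 'M[K]_(fdim P, fdim N)),
    is_hom g -> row_full g -> is_hom f ->
    exists h : 'M[K]_(fdim P, fdim M), is_hom h /\ h *m g = f.

Definition injective_mod (I : fmod A) : Prop :=
  forall (L M : fmod A) (f : 'M[K]_(fdim L, fdim M)) (g : 'M[K]_(fdim L, fdim I)),
    is_hom f -> row_free f -> is_hom g ->
    exists h : 'M[K]_(fdim M, fdim I), is_hom h /\ f *m h = g.

Definition perp (T : fmod A -> Prop) (M : fmod A) : Prop :=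
  forall (X : fmod A) (f : 'M[K]_(fdim X, fdim M)), T X -> is_hom f -> f = 0.

(* A is basic: no two orthogonal nonzero idempotents e, f with eA ~= fA
   (an iso eA -> fA is left multiplication by x in fAe with inverse y in eAf). *)
Definition basic_alg : Prop :=
  ~ exists e f x y : A,
      [/\ e * e = e, f * f = f, e * f = 0, f * e = 0 & e != 0] /\
      [/\ x = f * x * e, y = e * y * f, y * x = e & x * y = f].

End Modules.

(* Main.v *)
Require Import Defs.
From HB Require Import structures.
From mathcomp Require Import all_boot all_order all_algebra falgebra.
Local Open Scope ring_scope.
Set Implicit Arguments.
Unset Strict Implicit.
Unset Printing Implicit Defensive.
Import GRing.Theory.
From Stdlib Require Import Classical Lia.
From mathcomp Require Import zify.

Section Constr.
Variables (K : fieldType) (A : falgType K).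

Section Sub.
Variables (M : fmod A) (r : nat) (W : 'M[K]_(r, fdim M)).
Hypothesis Wfree : row_free W.
Hypothesis Wst : forall a, (W *m fact M a <= W)%MS.

Definition subact a := W *m fact M a *m pinvmx W.

Lemma subact_lin (k : K) (a b : A) : subact (k *: a + b) = k *: subact a + subact b.
Proof. by rewrite /subact fact_lin mulmxDr mulmxDl -!scalemxAr -scalemxAl. Qed.

Lemma subact1 : subact 1 = 1%:M.
Proof. by rewrite /subact fact1 mulmx1 mulmxVp. Qed.

Lemma subactM a b : subact (a * b) = subact a *m subact b.
Proof.
rewrite /subact factM mulmxA.
have E : W *m fact M a = W *m fact M a *m pinvmx W *m W by rewrite mulmxKpV.
by rewrite [in LHS]E !mulmxA.
Qed.

Definition subfmod : fmod A := @FMod K A r subact subact_lin subact1 subactM.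

Lemma sub_incl_hom : @is_hom K A subfmod M W.
Proof. by move=> a; rewrite /= /subact mulmxKpV. Qed.
End Sub.

Section Quot.
Variables (M : fmod A) (k : nat) (q : 'M[K]_(fdim M, k)).
Hypothesis qfull : row_full q.
Hypothesis qst : forall a, kermx q *m fact M a *m q = 0.

Definition quotact a := pinvmx q *m fact M a *m q.

Lemma pinvq : pinvmx q *m q = 1%:M.
Proof. by rewrite -{1}[pinvmx q]mul1mx mulmxKpV // submx_full. Qed.

Lemma quot_key a : fact M a *m q = q *m quotact a.
Proof.
have H : ((1%:M - q *m pinvmx q) <= kermx q)%MS.
  by apply/sub_kermxP; rewrite mulmxBl mul1mx -mulmxA pinvq mulmx1 subrr.
have E : (1%:M - q *m pinvmx q) *m fact M a *m q = 0.
  rewrite -(mulmxKpV H); set X := (_ *m pinvmx (kermx q)).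
  by rewrite -(mulmxA X) -(mulmxA X) qst mulmx0.
move: E; rewrite !mulmxBl mul1mx => /eqP; rewrite subr_eq0 => /eqP ->.
by rewrite /quotact !mulmxA.
Qed.

Lemma quotact_lin (c : K) (a b : A) : quotact (c *: a + b) = c *: quotact a + quotact b.
Proof. by rewrite /quotact fact_lin mulmxDr mulmxDl -!scalemxAr -scalemxAl. Qed.

Lemma quotact1 : quotact 1 = 1%:M.
Proof. by rewrite /quotact fact1 mulmx1 pinvq. Qed.

Lemma quotactM a b : quotact (a * b) = quotact a *m quotact b.
Proof.
transitivity (pinvmx q *m fact M a *m (fact M b *m q)).
  by rewrite /quotact factM !mulmxA.
by rewrite quot_key /quotact !mulmxA.
Qed.

Definition quotfmod : fmod A := @FMod K A k quotact quotact_lin quotact1 quotactM.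

Lemma quot_hom : @is_hom K A M quotfmod q.
Proof. by move=> a; rewrite quot_key. Qed.
End Quot.
End Constr.

Section Basic.
Variables (K : fieldType) (A : falgType K).

Lemma image_coker (X M : fmod A) (f : 'M[K]_(fdim X, fdim M)) : is_hom f ->
  exists (I C : fmod A) (p : 'M[K]_(fdim X, fdim I)) (j : 'M[K]_(fdim I, fdim M))
         (q : 'M[K]_(fdim M, fdim C)),
   [/\ is_hom p, row_full p, ses j q, fdim I = \rank f & fdim C = (fdim M - \rank f)%N].
Proof.
move=> Hf.
have ffa : forall a, (f *m fact M a <= f)%MS by move=> a; rewrite -Hf submxMl.
have Wst : forall a, (row_base f *m fact M a <= row_base f)%MS.
  move=> a; rewrite eq_row_base.
  apply: submx_trans (ffa a); apply: submxMr; by rewrite eq_row_base.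
have kerq : forall m (v : 'M[K]_(m, fdim M)),
    (v *m col_base (cokermx f) == 0) = (v <= f)%MS.
  move=> m v.
  have E : v *m cokermx f = v *m col_base (cokermx f) *m row_base (cokermx f).
    by rewrite -mulmxA mulmx_base.
  by rewrite submxE E (mulmx_free_eq0 _ (row_base_free (cokermx f))).
have qst : forall a, kermx (col_base (cokermx f)) *m fact M a *m col_base (cokermx f) = 0.
  move=> a; apply/eqP; rewrite kerq; apply: submx_trans (ffa a); apply: submxMr.
  by rewrite -kerq mulmx_ker.
exists (subfmod (row_base_free f) Wst).
exists (quotfmod (col_base_full (cokermx f)) qst).
exists (col_base f), (row_base f), (col_base (cokermx f)).
split.
- move=> a; apply: (row_free_inj (row_base_free f)) => /=.
  rewrite -mulmxA mulmx_base Hf /subact -mulmxA mulmxKpV //.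
  by rewrite mulmxA mulmx_base.
- exact: col_base_full.
- split.
  + exact: sub_incl_hom.
  + exact: quot_hom.
  + exact: row_base_free.
  + exact: col_base_full.
  + apply/andP; split.
      by rewrite sub_kermx kerq eq_row_base submx_refl.
    by rewrite eq_row_base -kerq mulmx_ker.
- by [].
- by rewrite /= mxrank_coker.
Qed.

Lemma kernel_mod (S N : fmod A) (g : 'M[K]_(fdim S, fdim N)) : is_hom g ->
  exists (Kr : fmod A) (k : 'M[K]_(fdim Kr, fdim S)),
    [/\ is_hom k, row_free k, k *m g = 0 & fdim Kr = (fdim S - \rank g)%N].
Proof.
move=> Hg.
have W0 : row_base (kermx g) *m g = 0.
  by apply/sub_kermxP; rewrite eq_row_base submx_refl.
have Wst : forall a, (row_base (kermx g) *m fact S a <= row_base (kermx g))%MS.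
  move=> a; rewrite eq_row_base; apply/sub_kermxP.
  by rewrite -mulmxA Hg mulmxA W0 mul0mx.
exists (subfmod (row_base_free (kermx g)) Wst), (row_base (kermx g)).
split => //.
- exact: sub_incl_hom.
- exact: row_base_free.
- by rewrite /= mxrank_ker.
Qed.
End Basic.

Section Fin.
Variables (X : Type) (R : X -> X -> Prop).
Hypothesis Rrefl : forall x, R x x.
Hypothesis Rtrans : forall x y z, R x y -> R y z -> R x z.
Variable G : X -> Prop.

Lemma pin_split (y : X) s : pin y s -> exists s1 s2, s = s1 ++ y :: s2.
Proof.
elim: s => [//|a s IH] /= [->|H]; first by exists [::], s.
by case: (IH H) => s1 [s2 ->]; exists (a :: s1), s2.
Qed.

Lemma pin_cat_inv (y y' : X) s1 s2 :
  pin y' (s1 ++ y :: s2) -> y = y' \/ pin y' (s1 ++ s2).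
Proof.
elim: s1 => [//|a s1 IH] /= [->|H]; first by right; left.
by case: (IH H) => [->|H']; [left | right; right].
Qed.

Lemma fin_max_aux n : forall (s : seq X), (size s <= n)%N -> forall x, G x ->
  (forall w, G w -> R x w -> exists2 y, pin y s & R w y /\ R y w) ->
  exists z, [/\ G z, R x z & forall w, G w -> R z w -> R w z].
Proof.
elim: n => [|n IH] s Hs x Gx Hx.
  case: s Hs Hx => [|//] _ Hx.
  by case: (Hx x Gx (Rrefl x)).
case: (classic (exists w, [/\ G w, R x w & ~ R w x])) => [[w [Gw Rxw nRwx]]|Hn]; last first.
  exists x; split => // w Gw Rxw; apply: NNPP => nR; apply: Hn; by exists w.
case: (Hx x Gx (Rrefl x)) => y /pin_split [s1 [s2 Es]] [Rxy Ryx].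
have Hs' : (size (s1 ++ s2) <= n)%N.
  by move: Hs; rewrite Es !size_cat /= addnS ltnS.
have [z [Gz Rwz Hz]] : exists z, [/\ G z, R w z & forall w, G w -> R z w -> R w z].
  apply: (IH _ Hs' w Gw) => u Gu Rwu.
  case: (Hx u Gu (Rtrans Rxw Rwu)) => y'; rewrite Es => /pin_cat_inv [<-|Hy'] E.
    by case: nRwx; apply: (Rtrans Rwu); apply: (Rtrans (proj1 E)).
  by exists y'.
by exists z; split => //; apply: (Rtrans Rxw).
Qed.

Lemma fin_max (s : seq X) : (forall x, G x -> exists2 y, pin y s & R x y /\ R y x) ->
  forall x, G x -> exists z, [/\ G z, R x z & forall w, G w -> R z w -> R w z].
Proof.
move=> Hs x Gx; apply: (fin_max_aux (leqnn (size s)) Gx) => w Gw _; exact: Hs.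
Qed.
End Fin.

Section Main.
Variables (K : fieldType) (A : falgType K).
Implicit Types (U V W T : fmod A -> Prop) (M N P I : fmod A).

Definition homz (P M : fmod A) := forall h : 'M[K]_(fdim P, fdim M), is_hom h -> h = 0.

Lemma hom_id M : is_hom (1%:M : 'M[K]_(fdim M)).
Proof. by move=> a; rewrite mul1mx mulmx1. Qed.

Lemma hom_comp (L M N : fmod A) (f : 'M[K]_(fdim L, fdim M)) (g : 'M[K]_(fdim M, fdim N)) :
  is_hom f -> is_hom g -> is_hom (f *m g).
Proof. by move=> Hf Hg a; rewrite mulmxA Hf -mulmxA Hg mulmxA. Qed.

Lemma zero_rows m n (h : 'M[K]_(m, n)) : m = 0%N -> h = 0.
Proof. by move=> E; apply/eqP; rewrite -mxrank_eq0 -leqn0; apply: leq_trans (rank_leq_row h) _; rewrite E. Qed.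

Lemma zero_cols m n (h : 'M[K]_(m, n)) : n = 0%N -> h = 0.
Proof. by move=> E; apply/eqP; rewrite -mxrank_eq0 -leqn0; apply: leq_trans (rank_leq_col h) _; rewrite E. Qed.

Lemma id_nz n : (0 < n)%N -> (1%:M : 'M[K]_n) <> 0.
Proof. by move=> Hp E; have := mxrank1 K n; rewrite E mxrank0 => H; rewrite -H in Hp. Qed.

Lemma rank_pos m n (h : 'M[K]_(m, n)) : h <> 0 -> (0 < \rank h)%N.
Proof. by move=> H; rewrite lt0n mxrank_eq0; apply/eqP. Qed.

Lemma full_dim0 m n (h : 'M[K]_(m, n)) : row_full h -> h = 0 -> n = 0%N.
Proof. by rewrite /row_full => /eqP E H; rewrite -E H mxrank0. Qed.

Lemma pinv_full m n (q : 'M[K]_(m, n)) : row_full q -> pinvmx q *m q = 1%:M.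
Proof. by move=> qf; rewrite -{1}[pinvmx q]mul1mx mulmxKpV // submx_full. Qed.

Lemma full_mul m n p (a : 'M[K]_(m, n)) (b : 'M[K]_(n, p)) :
  row_full a -> row_full b -> row_full (a *m b).
Proof. by move=> fa; rewrite /row_full (eqmxMfull b fa). Qed.

Lemma perp_anti X Y N : tsub X Y -> perp Y N -> perp X N.
Proof. by move=> H HY Z f XZ Hf; apply: HY (H _ XZ) Hf. Qed.

Lemma factor_sub (P L M N : fmod A) f g (h : 'M[K]_(fdim P, fdim M)) :
  @ses K A L M N f g -> is_hom h -> h *m g = 0 ->
  exists k : 'M[K]_(fdim P, fdim L), is_hom k /\ h = k *m f.
Proof.
case=> Hf Hg ffree gfull /andP [_ kf] Hh hg0.
have hf : (h <= f)%MS by apply: submx_trans kf; apply/sub_kermxP.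
have Ek : h *m pinvmx f *m f = h by rewrite mulmxKpV.
move: (h *m pinvmx f) Ek => k Ek.
exists k; split => // a.
apply: (row_free_inj ffree) => /=.
by rewrite -mulmxA Ek Hh -Ek -!mulmxA -Hf.
Qed.

Lemma factor_quot (L M N X : fmod A) f g (h : 'M[K]_(fdim M, fdim X)) :
  @ses K A L M N f g -> is_hom h -> f *m h = 0 ->
  exists k : 'M[K]_(fdim N, fdim X), is_hom k /\ h = g *m k.
Proof.
case=> Hf Hg ffree gfull /andP [_ kf] Hh fh0.
have H1 : ((1%:M - g *m pinvmx g) <= f)%MS.
  apply: submx_trans kf; apply/sub_kermxP.
  by rewrite mulmxBl mul1mx -mulmxA pinv_full // mulmx1 subrr.
have E : (1%:M - g *m pinvmx g) *m h = 0.
  move: (mulmxKpV H1); move: (_ *m pinvmx f) => Y <-.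
  by rewrite -mulmxA fh0 mulmx0.
move: E; rewrite mulmxBl mul1mx => /eqP; rewrite subr_eq0 => /eqP Eh.
rewrite -mulmxA in Eh; move: (pinvmx g *m h) Eh => k Eh.
exists k; split => //.
move=> a; apply: (row_full_inj gfull) => /=.
by rewrite !mulmxA -Hg -mulmxA -Eh Hh Eh.
Qed.

Section Part1.
Variables (U : fmod A -> Prop) (P : fmod A).
Hypothesis tcU : torsion_class U.
Hypothesis projP : projective_mod P.

Definition V0p M := U M /\ homz P M.

Lemma V0p_tc : torsion_class V0p.
Proof.
case: tcU => U0 Uq Ue; split.
- move=> M dM; split; first exact: U0.
  by move=> h _; apply: zero_cols.
- move=> M N g Hg gf [UM hM]; split; first exact: Uq Hg gf UM.
  move=> h Hh; case: (projP Hg gf Hh) => h' [Hh' <-].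
  by rewrite (hM h' Hh') mul0mx.
- move=> L M N f g Hs [UL hL] [UN hN]; split; first exact: Ue Hs UL UN.
  move=> h Hh.
  have hg0 : h *m g = 0 by apply: hN; apply: hom_comp Hh _; case: Hs.
  case: (factor_sub Hs Hh hg0) => k [Hk ->].
  by rewrite (hL k Hk) mul0mx.
Qed.

Lemma key1 W : torsion_class W -> tsub V0p W -> W P -> tsub W U -> tsub U W.
Proof.
case=> W0 Wq We sV0 WP _.
suff H : forall n M, (fdim M <= n)%N -> U M -> W M.
  by move=> M; apply: H (leqnn _).
elim=> [|n IH] M dM UM.
  by apply: W0; move: dM; rewrite leqn0 => /eqP.
case: (classic (homz P M)) => [hz|nhz]; first by apply: sV0.
have [h [Hh hnz]] : exists h : 'M[K]_(fdim P, fdim M), is_hom h /\ h <> 0.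
  apply: NNPP => Hn; apply: nhz => h Hh; apply: NNPP => hnz; apply: Hn; by exists h.
case: (image_coker Hh) => I [C [p [j [q [Hp pf Hs dI dC]]]]].
have WI : W I by apply: Wq Hp pf WP.
have [_ Hq _ qf _] := Hs.
have UC : U C by case: tcU => _ Uq' _; exact: Uq' Hq qf UM.
have WC : W C.
  apply: IH UC; rewrite dC.
  have := rank_pos hnz; have := rank_leq_col h; move: dM; lia.
exact: We Hs WI WC.
Qed.
End Part1.

Lemma part1 (U T : fmod A -> Prop) P : tors_finite A -> torsion_class U ->
  teq (pop_down U) T -> (0 < fdim P)%N -> projective_mod P -> T P -> False.
Proof.
move=> [s Hs] tcU EUT dP projP TP.
have [UP HP] : pop_down U P by apply/EUT.
pose G V := [/\ torsion_class V, tsub (V0p U P) V, tsub V U & ~ V P].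
have GV0 : G (V0p U P).
  split => //; first exact: V0p_tc.
  - by move=> M [].
  - move=> [_ hz]; apply: (id_nz dP); apply: hz; exact: hom_id.
have Rtrans : forall x y z : fmod A -> Prop, tsub x y -> tsub y z -> tsub x z.
  by move=> x y z H1 H2 M /H1 /H2.
have Hfin : forall V, G V -> exists2 y, pin y s & tsub V y /\ tsub y V.
  move=> V [tV _ _ _]; case: (Hs V tV) => y Py Ey; exists y => //.
  by split => M /Ey.
have Rrefl : forall x : fmod A -> Prop, tsub x x by move=> x M.
case: (fin_max Rrefl Rtrans Hfin GV0) => Vm [[tVm sV0 sVU nVP] _ Hmax].
have cov : tcover Vm U.
  split => //; first by move=> /(_ P UP).
  move=> W tW sVW sWU.
  case: (classic (W P)) => WP.
    right => M; split; first exact: sWU.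
    move=> UM; apply: (key1 (P:=P) tcU tW) => //; exact: Rtrans sV0 sVW.
  left => M; split; last exact: sVW.
  apply: (Hmax W) => //; split => //; exact: Rtrans sV0 sVW.
exact: nVP (HP _ cov).
Qed.

Lemma lperp_tc (F : fmod A -> Prop) :
  torsion_class (fun M => forall N, F N -> homz M N).
Proof.
split.
- by move=> M dM N _ h _; apply: zero_rows.
- move=> M X g Hg gf HM N FN h Hh.
  have E := HM N FN (g *m h) (hom_comp Hg Hh).
  by apply: (row_full_inj gf); rewrite E mulmx0.
- move=> L M N' f g Hs HL HN N FN h Hh.
  have fh0 : f *m h = 0 by apply: (HL N FN); apply: hom_comp _ Hh; case: Hs.
  case: (factor_quot Hs Hh fh0) => k [Hk ->].
  by rewrite (HN N FN k Hk) mulmx0.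
Qed.

Lemma S_min I : (0 < fdim I)%N -> exists S (i : 'M[K]_(fdim S, fdim I)),
  [/\ is_hom i, i <> 0 & forall S' (i' : 'M[K]_(fdim S', fdim I)),
      (fdim S' < fdim S)%N -> is_hom i' -> i' = 0].
Proof.
move=> dI.
suff H : forall n S (i : 'M[K]_(fdim S, fdim I)), (fdim S <= n)%N -> is_hom i -> i <> 0 ->
  exists S (i : 'M[K]_(fdim S, fdim I)),
  [/\ is_hom i, i <> 0 & forall S' (i' : 'M[K]_(fdim S', fdim I)),
      (fdim S' < fdim S)%N -> is_hom i' -> i' = 0].
  by apply: (H _ I 1%:M (leqnn _) (hom_id I) (id_nz dI)).
elim=> [|n IH] S i dS Hi inz.
  by case: inz; apply: zero_rows; move: dS; rewrite leqn0 => /eqP.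
case: (classic (exists S' (i' : 'M[K]_(fdim S', fdim I)),
    [/\ (fdim S' < fdim S)%N, is_hom i' & i' <> 0])) => [[S' [i' [d' Hi' nz']]]|Hn].
  by apply: (IH S' i') => //; move: d' dS; lia.
exists S, i; split => // S' i' d' Hi'; apply: NNPP => nz'; apply: Hn.
by exists S', i'.
Qed.

Lemma min_free I S (i : 'M[K]_(fdim S, fdim I)) : is_hom i -> i <> 0 ->
  (forall S' (i' : 'M[K]_(fdim S', fdim I)), (fdim S' < fdim S)%N -> is_hom i' -> i' = 0) ->
  row_free i.
Proof.
move=> Hi inz Hmin; apply: NNPP => nf.
have nf' : \rank i <> fdim S by move=> E; apply: nf; rewrite /row_free E.
case: (image_coker Hi) => Im [C [p [j [q [Hp pf Hs dIm dC]]]]].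
have [Hj _ jfree _ _] := Hs.
have ri := rank_pos inz; have := rank_leq_row i => rl.
have j0 : j = 0 by apply: (Hmin Im j) => //; rewrite dIm; lia.
move: jfree; rewrite /row_free j0 mxrank0 => /eqP; lia.
Qed.

Section Part2.
Variables (U : fmod A -> Prop) (I : fmod A).
Hypothesis tcU : torsion_class U.

Definition F2 N := perp U N /\ homz N I.
Definition V0i M := forall N, F2 N -> homz M N.

Lemma S_in_V0 (injI : injective_mod I) S (i : 'M[K]_(fdim S, fdim I)) : is_hom i -> i <> 0 ->
  (forall S' (i' : 'M[K]_(fdim S', fdim I)), (fdim S' < fdim S)%N -> is_hom i' -> i' = 0) ->
  V0i S.
Proof.
move=> Hi inz Hmin; have ifree := min_free Hi inz Hmin.
move=> N [_ hzN] g Hg; apply: NNPP => gnz.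
case: (classic (row_free g)) => gf.
  case: (injI _ _ _ _ Hg gf Hi) => h [Hh Egh].
  by apply: inz; rewrite -Egh (hzN h Hh) mulmx0.
case: (kernel_mod Hg) => Kr [k [Hk kf kg dKr]].
have gf' : \rank g <> fdim S by move=> E; apply: gf; rewrite /row_free E.
have rg := rank_pos gnz; have := rank_leq_row g => rl.
have ki0 : k *m i = 0 by apply: (Hmin Kr) => //; [rewrite dKr; lia | exact: hom_comp].
have := mxrankMfree k ifree; rewrite ki0 mxrank0.
move: kf; rewrite /row_free => /eqP E1 E2; rewrite E1 in E2; lia.
Qed.

Lemma quot_perp n M : (fdim M <= n)%N -> ~ U M ->
  exists N (g : 'M[K]_(fdim M, fdim N)), [/\ is_hom g, row_full g, ~ U N & perp U N].
Proof.
case: tcU => U0 Uq Ue.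
elim: n M => [|n IH] M dM nUM.
  by case: nUM; apply: U0; move: dM; rewrite leqn0 => /eqP.
case: (classic (perp U M)) => [pM|npM].
  exists M, 1%:M; split => //; first exact: hom_id.
  by rewrite /row_full mxrank1.
have [X [f [UX Hf fnz]]] : exists X (f : 'M[K]_(fdim X, fdim M)), [/\ U X, is_hom f & f <> 0].
  apply: NNPP => Hn; apply: npM => X f UX Hf; apply: NNPP => fnz; apply: Hn.
  by exists X, f.
case: (image_coker Hf) => Im [C [p [j [q [Hp pf Hs dIm dC]]]]].
have [_ Hq _ qf _] := Hs.
have UIm : U Im by apply: Uq Hp pf UX.
have nUC : ~ U C by move=> UC; apply: nUM; apply: Ue Hs UIm UC.
have rf := rank_pos fnz; have := rank_leq_col f => rl.
case: (IH C _ nUC) => [|N [g [Hg gf nUN pUN]]]; first by rewrite dC; lia.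
exists N, (q *m g); split => //; [exact: hom_comp | exact: full_mul].
Qed.

Lemma key2 W : torsion_class W -> tsub U W -> tsub W V0i -> perp W I -> tsub W U.
Proof.
move=> [W0 Wq We] sUW sWV pWI M WM; apply: NNPP => nUM.
case: (quot_perp (leqnn _) nUM) => N [g [Hg gf nUN pUN]].
have WN := Wq _ _ g Hg gf WM.
have hz : homz N I by move=> h Hh; apply: pWI WN Hh.
have g0 := sWV M WM N (conj pUN hz) g Hg.
by apply: nUN; case: tcU => U0 _ _; apply: U0; apply: full_dim0 gf g0.
Qed.
End Part2.

Lemma part2 (U T : fmod A -> Prop) I : tors_finite A -> torsion_class U ->
  teq (pop_up U) T -> (0 < fdim I)%N -> injective_mod I -> perp T I -> False.
Proof.
move=> [s Hs] tcU EUT dI injI pTI.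
have sUT : tsub U T by move=> M UM; apply/EUT => W _ sUW _; exact: sUW.
have pUI := perp_anti sUT pTI.
pose G V := [/\ torsion_class V, tsub U V, tsub V (V0i U I) & ~ perp V I].
case: (S_min dI) => S [i [Hi inz Hmin]].
have V0S := S_in_V0 (U:=U) injI Hi inz Hmin.
have GV0 : G (V0i U I).
  split => //.
  - exact: (lperp_tc (F2 U I)).
  - by move=> M UM N [pUN _] h Hh; exact: pUN UM Hh.
  - by move=> p; apply: inz; exact: p S i V0S Hi.
have Rtrans : forall x y z : fmod A -> Prop, tsub y x -> tsub z y -> tsub z x.
  by move=> x y z H1 H2 M /H2 /H1.
have Rrefl : forall x : fmod A -> Prop, tsub x x by move=> x M.
have Hfin : forall V, G V -> exists2 y, pin y s & tsub y V /\ tsub V y.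
  move=> V [tV _ _ _]; case: (Hs V tV) => y Py Ey; exists y => //.
  by split => M /Ey.
case: (fin_max (R := fun x y => tsub y x) Rrefl Rtrans Hfin GV0)
  => Vm [[tVm sUVm sVmV0 npVm] _ Hmin'].
have cov : tcover U Vm.
  split => //; first by move=> H; apply: npVm; exact: perp_anti H pUI.
  move=> W tW sUW sWVm.
  case: (classic (perp W I)) => pW.
    left => M; split; last exact: sUW.
    move=> WM; apply: (key2 tcU tW sUW _ pW WM) => N WN; exact: sVmV0 (sWVm N WN).
  right => M; split; first exact: sWVm.
  apply: (Hmin' W) => //; split => // N /sWVm /sVmV0 //.
have sVmT : tsub Vm T.
  by move=> M VmM; apply/EUT => W tW sUW Hc; exact: Hc Vm cov M VmM.
by apply: npVm; exact: perp_anti sVmT pTI.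
Qed.

End Main.

Theorem lemma5p8 (K : fieldType) (A : falgType K) (T : fmod A -> Prop) :
  basic_alg A -> tors_finite A -> torsion_class T ->
  ((exists P : fmod A, (0 < fdim P)%N /\ projective_mod P /\ T P) ->
      ~ in_image_pop_down T) /\
  ((exists I : fmod A, (0 < fdim I)%N /\ injective_mod I /\ perp T I) ->
      ~ in_image_pop_up T).
Proof.
move=> _ fin tcT; split.
  move=> [P [dP [projP TP]]] [U [tcU EUT]].
  exact: (part1 fin tcU EUT dP projP TP).
move=> [I [dI [injI pTI]]] [U [tcU EUT]].
exact: (part2 fin tcU EUT dI injI pTI).
Qed.
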